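(* Let $R$ be a commutative ring with $1$, let $A,B\unlhd R$ be ideals, and let $n\ge 3$. Then $$ C_{\operatorname{GL}(n,R)}\Big(E(n,R,A),\big[E(n,R,(B:A)),E(n,R,A)\big]\Big)=C\big(n,R,(B:A)\big). $$
   Context: Commutators are left-normed: $[x,y]=xyx^{-1}y^{-1}$, and for subgroups $F,H$, $[F,H]$ is the subgroup generated by all $[f,h]$, $f\in F$, $h\in H$. For subgroups $F,H$ of a group $G$, the centraliser of $F$ modulo $H$ is $C_G(F,H)=\{g\in G\mid [f,g]\in H \text{ for all } f\in F\}$. For $\xi\in R$ and $1\le i\ne j\le n$, $t_{ij}(\xi)=e+\xi e_{ij}$. For an ideal $I$, $E(n,I)$ is the subgroup generated by all $t_{ij}(\xi)$, $\xi\in I$, $i\ne j$; $E(n,R)=E(n,R)$ with $I=R$ is the elementary group; and the relative elementary subgroup $E(n,R,I)$ is the normal closure of $E(n,I)$ in $E(n,R)$. The full congruence subgroup $C(n,R,I)$ is the set of $g\in\operatorname{GL}(n,R)$ whose image modulo $I$ is a scalar matrix $\lambda e$ with $\lambda\in (R/I)^*$, i.e. $g_{ij}\in I$ and $g_{ii}-g_{jj}\in I$ for all $i\ne j$. The ideal quotient is $(B:A)=\{x\in R\mid xA\subseteq B\}$. *)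

(* Defs.v *)
From HB Require Import structures.
From mathcomp Require Import all_boot all_order all_algebra.
Set Implicit Arguments. Unset Strict Implicit. Unset Printing Implicit Defensive.
Import GRing.Theory.
Local Open Scope ring_scope.

Section Defs.
Variables (R : comPzRingType) (n : nat).
Notation M := 'M[R]_n.

Definition is_ideal (I : R -> Prop) : Prop :=
  I 0 /\ (forall x y, I x -> I y -> I (x + y)) /\ (forall r x, I x -> I (r * x)).

Definition ideal_quot (B A : R -> Prop) : R -> Prop :=
  fun x => forall a, A a -> B (x * a).

Definition inv_of (x y : M) : Prop := x *m y = 1%:M /\ y *m x = 1%:M.

Definition GLn : M -> Prop := fun g => exists h, inv_of g h.

Inductive gen (S : M -> Prop) : M -> Prop :=
  | gen1 : gen S 1%:M
  | gen_in : forall x, S x -> gen S x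
  | gen_inv : forall x y, S x -> inv_of x y -> gen S y
  | gen_mul : forall x y, gen S x -> gen S y -> gen S (x *m y).

Definition comm_set (F H : M -> Prop) : M -> Prop :=
  fun z => exists f h f' h', [/\ F f, H h, inv_of f f', inv_of h h' &
                               z = f *m h *m f' *m h'].

Definition comm_subgroup (F H : M -> Prop) : M -> Prop := gen (comm_set F H).

Definition centr_mod (F H : M -> Prop) : M -> Prop :=
  fun g => GLn g /\ forall f f' g', F f -> inv_of f f' -> inv_of g g' ->
                                    H (f *m g *m f' *m g').

Definition transv (i j : 'I_n) (xi : R) : M := 1%:M + xi *: delta_mx i j.

Definition elem_ideal (I : R -> Prop) : M -> Prop :=
  gen (fun x => exists i j xi, [/\ i != j, I xi & x = transv i j xi]).

Definition elem : M -> Prop := elem_ideal (fun _ => True).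

(* relative elementary subgroup E(n,R,I): normal closure of E(n,I) in E(n,R) *)
Definition rel_elem (I : R -> Prop) : M -> Prop :=
  gen (fun x => exists g g' y, [/\ elem g, inv_of g g', elem_ideal I y &
                                  x = g *m y *m g']).

Definition full_cong (I : R -> Prop) : M -> Prop :=
  fun g => GLn g /\ forall i j : 'I_n, i != j -> I (g i j) /\ I (g i i - g j j).

End Defs.

(* Main.v *)
Require Import Defs.
From mathcomp Require Import all_boot all_order all_algebra.
From mathcomp Require Import ring zify.
Set Implicit Arguments. Unset Strict Implicit. Unset Printing Implicit Defensive.
Import GRing.Theory.
Local Open Scope ring_scope.


Section Basic.
Variables (R : comPzRingType) (n : nat).
Local Notation M := 'M[R]_n.

Lemma inv_uniq (x y z : M) : inv_of x y -> inv_of x z -> y = z.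
Proof.
move=> [h1 h2] [h3 h4].
by rewrite -[y]mulmx1 -h3 mulmxA h2 mul1mx.
Qed.

Lemma inv1 : inv_of (1%:M : M) 1%:M.
Proof. by split; rewrite mul1mx. Qed.

Lemma inv_sym (x y : M) : inv_of x y -> inv_of y x.
Proof. by case. Qed.

Lemma inv_mul (x x' y y' : M) : inv_of x x' -> inv_of y y' ->
  inv_of (x *m y) (y' *m x').
Proof.
move=> [h1 h2] [h3 h4]; split.
  by rewrite mulmxA -(mulmxA x) h3 mulmx1 h1.
by rewrite mulmxA -(mulmxA y') h2 mulmx1 h4.
Qed.

Lemma gen_GL (S : M -> Prop) : (forall s, S s -> GLn s) ->
  forall x, gen S x -> GLn x.
Proof.
move=> hS x; elim => [|y /hS //|a b Sa hab|a b _ [a' ha] _ [b' hb]].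
- by exists 1%:M; exact: inv1.
- by exists a; apply: inv_sym.
- by exists (b' *m a'); apply: inv_mul.
Qed.

Lemma gen_inv_closed (S : M -> Prop) : (forall s, S s -> GLn s) ->
  forall x y, gen S x -> inv_of x y -> gen S y.
Proof.
move=> hS x y gx; elim: gx y => [|a Sa|a b Sa hab|a b ga IHa gb IHb] y hy.
- by rewrite (inv_uniq hy inv1); apply: gen1.
- exact: gen_inv hy.
- by rewrite (inv_uniq hy (inv_sym hab)); apply: gen_in.
- have [a' ha] := gen_GL hS ga; have [b' hb] := gen_GL hS gb.
  rewrite (inv_uniq hy (inv_mul ha hb)).
  by apply: gen_mul; [apply: IHb | apply: IHa].
Qed.

Lemma gen_conj (S : M -> Prop) (g g' : M) : (forall s, S s -> GLn s) ->
  inv_of g g' -> (forall s, S s -> gen S (g *m s *m g')) ->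
  forall x, gen S x -> gen S (g *m x *m g').
Proof.
move=> hS hg hc x; elim => [|a Sa|a b Sa hab|a b ga IHa gb IHb].
- by rewrite mulmx1 hg.1; apply: gen1.
- exact: hc.
- apply: (gen_inv_closed hS (hc _ Sa)).
  case: hab => h1 h2; case: hg => h3 h4; split.
    by rewrite !mulmxA -(mulmxA _ g') h4 mulmx1 -(mulmxA _ a) h1 mulmx1 h3.
  by rewrite !mulmxA -(mulmxA _ g') h4 mulmx1 -(mulmxA _ b) h2 mulmx1 h3.
- have -> : g *m (a *m b) *m g' = (g *m a *m g') *m (g *m b *m g').
    by rewrite !mulmxA -(mulmxA _ g') hg.2 mulmx1.
  exact: gen_mul.
Qed.

End Basic.


Section TLem.
Variables (R : comPzRingType) (n : nat).
Local Notation M := 'M[R]_n.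

Definition T (u : 'cV[R]_n) (s : 'rV[R]_n) : M := 1%:M + u *m s.

Lemma TT (u : 'cV[R]_n) s1 s2 : s1 *m u = 0 -> T u s1 *m T u s2 = T u (s1 + s2).
Proof.
move=> h; rewrite /T !(mulmxDl, mulmxDr) ?(mul1mx, mulmx1) mulmxA -(mulmxA u) h.
by rewrite mulmx0 mul0mx addr0 -addrA [u *m s2 + _]addrC.
Qed.

Lemma TT' (u1 u2 : 'cV[R]_n) s : s *m u2 = 0 -> T u1 s *m T u2 s = T (u1 + u2) s.
Proof.
move=> h; rewrite /T !(mulmxDl, mulmxDr) ?(mul1mx, mulmx1) mulmxA -(mulmxA u1) h.
by rewrite mulmx0 mul0mx addr0 -addrA [u2 *m s + _]addrC.
Qed.

Lemma T0 (u : 'cV[R]_n) : T u 0 = 1%:M.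
Proof. by rewrite /T mulmx0 addr0. Qed.

Lemma T0' (s : 'rV[R]_n) : T 0 s = 1%:M.
Proof. by rewrite /T mul0mx addr0. Qed.

Lemma Tinv (u : 'cV[R]_n) s : s *m u = 0 -> inv_of (T u s) (T u (- s)).
Proof.
move=> h; split; first by rewrite TT // subrr T0.
by rewrite TT ?addNr ?T0 // mulNmx h oppr0.
Qed.

Lemma Tconj (h h' : M) u s : inv_of h h' -> h *m T u s *m h' = T (h *m u) (s *m h').
Proof.
by case=> h1 h2; rewrite /T mulmxDr mulmxDl mulmx1 h1 !mulmxA.
Qed.

Lemma TZl (u : 'cV[R]_n) s (c : R) : T (c *: u) s = T u (c *: s).
Proof. by rewrite /T -scalemxAl scalemxAr. Qed.

Definition ecol (i : 'I_n) : 'cV[R]_n := delta_mx i 0.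

Lemma ecolE i (u : 'cV[R]_n) : 'e_i *m u = (u i 0)%:M.
Proof.
apply/matrixP => a b; rewrite !ord1 !mxE (bigD1 i) //= big1 ?addr0.
  by rewrite mxE !eqxx mul1r.
by move=> k /negbTE hk; rewrite mxE hk mul0r.
Qed.

Lemma erowE i (s : 'rV[R]_n) : s *m ecol i = (s 0 i)%:M.
Proof.
apply/matrixP => a b; rewrite !ord1 !mxE (bigD1 i) //= big1 ?addr0.
  by rewrite mxE !eqxx mulr1.
by move=> k /negbTE hk; rewrite mxE hk mulr0.
Qed.

Lemma sc0 m : (0 : R)%:M = 0 :> 'M[R]_m.
Proof. by apply/matrixP=> a b; rewrite !mxE mul0rn. Qed.

Lemma erow_ecol (j i : 'I_n) : 'e_j *m ecol i = (if j == i then 1%:M else 0 : 'M[R]_1).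
Proof. by rewrite /ecol mul_delta_mx_cond; case: (j == i); rewrite ?mulr1n ?mulr0n // (mx11_scalar (delta_mx 0 0)) mxE. Qed.

Lemma transvT (i j : 'I_n) (x : R) : transv i j x = T (ecol i) (x *: 'e_j).
Proof. by rewrite /transv /T -scalemxAr /ecol mul_delta_mx. Qed.

Lemma transvT' (i j : 'I_n) (x : R) : transv i j x = T (x *: ecol i) 'e_j.
Proof. by rewrite TZl transvT. Qed.

Lemma transv_add (i j : 'I_n) (x y : R) : i != j ->
  transv i j x *m transv i j y = transv i j (x + y).
Proof.
move=> hij; rewrite !transvT TT ?scalerDl //.
by rewrite -scalemxAl erow_ecol eq_sym (negbTE hij) scaler0.
Qed.

Lemma transv_inv (i j : 'I_n) (x : R) : i != j -> inv_of (transv i j x) (transv i j (- x)).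
Proof.
by move=> hij; split; rewrite transv_add // ?subrr ?addNr /transv scale0r addr0.
Qed.

Lemma delta_mul (i j k l : 'I_n) :
  (delta_mx i j : M) *m delta_mx k l = if j == k then delta_mx i l else 0.
Proof. by rewrite mul_delta_mx_cond; case: (j == k); rewrite ?mulr1n ?mulr0n. Qed.

Lemma zmod_aux (V : zmodType) (p q r s : V) : p + q + (r + s) - r + (- q - s + s) = p + s.
Proof. by rewrite subrK (addrC r s) addrA addrK addrAC addrK. Qed.

Lemma transv_comm (i j k : 'I_n) (x y : R) : i != j -> j != k -> i != k ->
  transv i j x *m transv j k y *m transv i j (- x) *m transv j k (- y)
  = transv i k (x * y).
Proof.
move=> hij hjk hik; rewrite /transv.
set a := x *: delta_mx i j; set b := y *: delta_mx j k.
have aa : a *m a = 0 by rewrite /a -scalemxAl -scalemxAr delta_mul eq_sym (negbTE hij) !scaler0.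
have bb : b *m b = 0 by rewrite /b -scalemxAl -scalemxAr delta_mul eq_sym (negbTE hjk) !scaler0.
have ba : b *m a = 0 by rewrite /a /b -scalemxAl -scalemxAr delta_mul eq_sym (negbTE hik) !scaler0.
have ab : a *m b = (x * y) *: delta_mx i k
  by rewrite /a /b -scalemxAl -scalemxAr delta_mul eqxx scalerA.
have -> : (- x) *: delta_mx i j = - a by rewrite /a scaleNr.
have -> : (- y) *: delta_mx j k = - b by rewrite /b scaleNr.
rewrite !(mulmxDl, mulmxDr, mul1mx, mulmx1, mulmxN, mulNmx, mulmxA).
rewrite aa -(mulmxA a b a) ba bb.
rewrite -!(mulmxA a b b) bb.
rewrite ?(mulmx0, mul0mx, oppr0, addr0, add0r, opprK).
rewrite ab; exact: zmod_aux.
Qed.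

Lemma ecol1 (m : 'I_n) : 'e_m *m ecol m = 1%:M.
Proof. by rewrite erow_ecol eqxx. Qed.

Lemma Tkey (m : 'I_n) (w : 'cV[R]_n) (s : 'rV[R]_n) :
  s *m w = 0 -> s *m ecol m = 0 -> ('e_m : 'rV_n) *m w = 0 ->
  T w s = T w 'e_m *m T (ecol m) s *m T w (- 'e_m) *m T (ecol m) (- s).
Proof.
move=> hsw hsm hmw.
rewrite (Tconj (ecol m) s (Tinv hmw)).
have -> : T w 'e_m *m ecol m = ecol m + w.
  by rewrite /T mulmxDl mul1mx -mulmxA ecol1 mulmx1 addrC.
have -> : s *m T w (- 'e_m) = s.
  by rewrite /T mulmxDr mulmx1 mulmxA hsw mul0mx addr0.
by rewrite addrC -TT' // -mulmxA (Tinv hsm).1 mulmx1.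
Qed.

End TLem.
Arguments ecol {R n}.


Section Groups.
Variables (R : comPzRingType) (n : nat).
Local Notation M := 'M[R]_n.

Lemma GL_mul (x y : M) : GLn x -> GLn y -> GLn (x *m y).
Proof. by move=> [x' hx] [y' hy]; exists (y' *m x'); apply: inv_mul. Qed.

Lemma gen_sub (S S' : M -> Prop) : (forall s, S s -> GLn s) ->
  (forall s, S' s -> GLn s) -> (forall s, S s -> gen S' s) ->
  forall x, gen S x -> gen S' x.
Proof.
move=> hS hS' hsub x; elim => [|a Sa|a b Sa hab|a b _ IHa _ IHb].
- exact: gen1.
- exact: hsub.
- exact: (gen_inv_closed hS' (hsub _ Sa) hab).
- exact: gen_mul.
Qed.

Definition egens (P : R -> Prop) : M -> Prop :=
  fun x => exists i j xi, [/\ i != j, P xi & x = transv i j xi].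

Lemma egens_GL (P : R -> Prop) (s : M) : egens P s -> GLn s.
Proof. by case=> i [j [xi [hij _ ->]]]; exists (transv i j (- xi)); apply: transv_inv. Qed.

Lemma elem_GL (P : R -> Prop) (x : M) : elem_ideal P x -> GLn x.
Proof. exact: (@gen_GL R n (egens P) (@egens_GL P) x). Qed.

Lemma elem_inv (P : R -> Prop) (x y : M) : elem_ideal P x -> inv_of x y -> elem_ideal P y.
Proof. exact: (@gen_inv_closed R n (egens P) (@egens_GL P) x y). Qed.

Lemma elem_ideal_elem (P : R -> Prop) (x : M) : elem_ideal P x -> elem x.
Proof.
apply: gen_sub; [exact: egens_GL| exact: egens_GL|].
by move=> s [i [j [xi [hij _ ->]]]]; apply: gen_in; exists i, j, xi.
Qed.

Definition rgens (P : R -> Prop) : M -> Prop :=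
  fun x => exists g g' y, [/\ elem g, inv_of g g', elem_ideal P y & x = g *m y *m g'].

Lemma rgens_GL (P : R -> Prop) (s : M) : rgens P s -> GLn s.
Proof.
case=> g [g' [y [eg hg ey ->]]].
apply: GL_mul; first apply: GL_mul; [exact: elem_GL eg | exact: elem_GL ey|].
by exists g; apply: inv_sym.
Qed.

Lemma rel_GL (P : R -> Prop) (x : M) : rel_elem P x -> GLn x.
Proof. exact: (@gen_GL R n (rgens P) (@rgens_GL P) x). Qed.

Lemma rel_inv (P : R -> Prop) (x y : M) : rel_elem P x -> inv_of x y -> rel_elem P y.
Proof. exact: (@gen_inv_closed R n (rgens P) (@rgens_GL P) x y). Qed.

Lemma elem_rel (P : R -> Prop) (x : M) : elem_ideal P x -> rel_elem P x.
Proof.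
apply: gen_sub; [exact: egens_GL| exact: rgens_GL|].
move=> s hs; apply: gen_in; exists 1%:M, 1%:M, s; split => //.
- exact: gen1.
- exact: inv1.
- exact: gen_in.
- by rewrite mul1mx mulmx1.
Qed.

Lemma rel_elem_elem (P : R -> Prop) (x : M) : rel_elem P x -> elem x.
Proof.
apply: gen_sub; [exact: rgens_GL| exact: egens_GL|].
move=> s [g [g' [y [eg hg ey ->]]]].
apply: gen_mul; first apply: gen_mul => //.
  exact: elem_ideal_elem ey.
exact: elem_inv eg hg.
Qed.

Lemma rel_conj (P : R -> Prop) (g g' x : M) : elem g -> inv_of g g' -> rel_elem P x ->
  rel_elem P (g *m x *m g').
Proof.
move=> eg hg; apply: gen_conj => //; first exact: rgens_GL.
move=> s [g0 [g0' [y [eg0 hg0 ey ->]]]]; apply: gen_in.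
exists (g *m g0), (g0' *m g'), y; split => //.
- exact: gen_mul.
- exact: inv_mul.
- by rewrite !mulmxA.
Qed.

Lemma comm_GL (F G : M -> Prop) (s : M) : (forall x, F x -> GLn x) -> (forall x, G x -> GLn x) ->
  comm_set F G s -> GLn s.
Proof.
move=> hF hG [f [h [f' [h' [Ff Gh hf hh ->]]]]].
apply: GL_mul; first apply: GL_mul; first apply: GL_mul.
- exact: hF.
- exact: hG.
- by exists f; apply: inv_sym.
- by exists h; apply: inv_sym.
Qed.

Variables (A I : R -> Prop).
Definition Hg : M -> Prop := comm_subgroup (@rel_elem R n I) (@rel_elem R n A).

Lemma Hgens_GL (s : M) : comm_set (rel_elem I) (rel_elem A) s -> GLn s.
Proof. by apply: comm_GL; apply: rel_GL. Qed.

Lemma H1 : Hg (1%:M : M).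
Proof. exact: gen1. Qed.

Lemma Hmul (x y : M) : Hg x -> Hg y -> Hg (x *m y).
Proof. exact: gen_mul. Qed.

Lemma Hinv (x y : M) : Hg x -> inv_of x y -> Hg y.
Proof. exact: (@gen_inv_closed R n _ Hgens_GL x y). Qed.

Lemma HGL (x : M) : Hg x -> GLn x.
Proof. exact: (@gen_GL R n _ Hgens_GL x). Qed.

Lemma Hcomm (f h f' h' : M) : rel_elem I f -> rel_elem A h -> inv_of f f' -> inv_of h h' ->
  Hg (f *m h *m f' *m h').
Proof. by move=> *; apply: gen_in; exists f, h, f', h'. Qed.

Lemma Hconj (g g' x : M) : elem g -> inv_of g g' -> Hg x -> Hg (g *m x *m g').
Proof.
move=> eg hg; apply: gen_conj => //; first exact: Hgens_GL.
move=> s [f [h [f' [h' [Ff Gh hf hh ->]]]]].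
have E (a b c d : M) : g *m (a *m b *m c *m d) *m g' =
   (g *m a *m g') *m (g *m b *m g') *m (g *m c *m g') *m (g *m d *m g').
  by rewrite !mulmxA -!(mulmxA _ g' g) hg.2 !mulmx1.
rewrite E; apply: Hcomm; try exact: rel_conj.
-
  case: hf => h1 h2; case: hg => h3 h4; split.
    by rewrite !mulmxA -(mulmxA _ g' g) h4 mulmx1 -(mulmxA _ f f') h1 mulmx1 h3.
  by rewrite !mulmxA -(mulmxA _ g' g) h4 mulmx1 -(mulmxA _ f' f) h2 mulmx1 h3.
- case: hh => h1 h2; case: hg => h3 h4; split.
    by rewrite !mulmxA -(mulmxA _ g' g) h4 mulmx1 -(mulmxA _ h h') h1 mulmx1 h3.
  by rewrite !mulmxA -(mulmxA _ g' g) h4 mulmx1 -(mulmxA _ h' h) h2 mulmx1 h3.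
Qed.

End Groups.


Section Good.
Variables (R : comPzRingType) (n : nat) (A I : R -> Prop).
Hypotheses (hA : is_ideal A) (hI : is_ideal I) (hn : (3 <= n)%N).
Local Notation M := 'M[R]_n.
Local Notation H := (@Hg R n A I).

Lemma third (p q : 'I_n) : exists r : 'I_n, r != p /\ r != q.
Proof.
have h0 : (0 < n)%N by lia.
have h1 : (1 < n)%N by lia.
have h2 : (2 < n)%N by lia.
pose r0 := Ordinal h0; pose r1 := Ordinal h1; pose r2 := Ordinal h2.
have [e0|e0] := boolP ((r0 != p) && (r0 != q)).
  by case/andP: e0 => ? ?; exists r0.
have [e1|e1] := boolP ((r1 != p) && (r1 != q)).
  by case/andP: e1 => ? ?; exists r1.
exists r2; move: e0 e1; rewrite -!val_eqE /=.
case: p q => [p hp] [q hq] /=; lia.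
Qed.

Definition good (c : R) := forall p q : 'I_n, p != q -> H (transv p q c).

Lemma idealM (a b : R) (P : R -> Prop) : is_ideal P -> P b -> P (a * b).
Proof. by case=> _ [_ h]; apply: h. Qed.

Lemma idealMr (a b : R) (P : R -> Prop) : is_ideal P -> P a -> P (a * b).
Proof. by move=> hP ha; rewrite mulrC; apply: idealM. Qed.

Lemma idealD (a b : R) (P : R -> Prop) : is_ideal P -> P a -> P b -> P (a + b).
Proof. by case=> _ [h _]; apply: h. Qed.

Lemma ideal0 (P : R -> Prop) : is_ideal P -> P 0.
Proof. by case. Qed.

Lemma idealN (a : R) (P : R -> Prop) : is_ideal P -> P a -> P (- a).
Proof. by move=> hP ha; rewrite -mulN1r; apply: idealM. Qed.

Lemma idealB (a b : R) (P : R -> Prop) : is_ideal P -> P a -> P b -> P (a - b).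
Proof. by move=> hP ha hb; apply: idealD => //; apply: idealN. Qed.

Lemma transv_egens (P : R -> Prop) (p q : 'I_n) (c : R) : p != q -> P c ->
  elem_ideal P (transv p q c).
Proof. by move=> hpq hc; apply: gen_in; exists p, q, c. Qed.

Lemma transv_elem (p q : 'I_n) (c : R) : p != q -> elem (transv p q c).
Proof. by move=> hpq; apply: transv_egens. Qed.

Lemma good_AI (a b : R) : A a -> I b -> good (a * b).
Proof.
move=> ha hb p q hpq; have [r [hrp hrq]] := third p q.
have hpr : p != r by rewrite eq_sym.
rewrite mulrC -(transv_comm b a hpr hrq hpq).
apply: Hcomm; try (apply: transv_inv => //).
  by apply: elem_rel; apply: transv_egens.
by apply: elem_rel; apply: transv_egens.
Qed.

Lemma good_AIr (a b r : R) : A a -> I b -> good (a * b * r).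
Proof. by move=> ha hb; rewrite -mulrA; apply: good_AI => //; apply: idealMr. Qed.

Lemma col_sum (x : 'cV[R]_n) : x = \sum_(p < n) x p 0 *: ecol p.
Proof.
apply/matrixP => a b; rewrite summxE (bigD1 a) //= big1 => [|k hk].
  by rewrite !mxE !eqxx ord1 mulr1 addr0.
by rewrite !mxE eq_sym (negbTE hk) mulr0.
Qed.

Lemma Tgood (x : 'cV[R]_n) (s : 'rV[R]_n) :
  (forall p, x p 0 * s 0 p = 0) -> (forall p q, p != q -> good (x p 0 * s 0 q)) ->
  H (T x s).
Proof.
move=> hd ho.
suff : s *m x = 0 /\ H (T x s) by case.
rewrite [x in T x s]col_sum [x in s *m x]col_sum.
apply: (big_ind (fun y => s *m y = 0 /\ H (T y s))).
- by rewrite mulmx0 T0'; split => //; apply: H1.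
- move=> y1 y2 [h1 H1'] [h2 H2']; rewrite mulmxDr h1 h2 addr0; split => //.
  by rewrite -TT' //; apply: Hmul.
move=> p _; split.
  by rewrite -scalemxAr erowE scale_scalar_mx hd sc0.
rewrite TZl.
suff : (x p 0 *: s) *m ecol p = 0 /\ H (T (ecol p) (x p 0 *: s)) by case.
rewrite [_ *: s]row_sum_delta.
apply: (big_ind (fun z => z *m ecol p = 0 /\ H (T (ecol p) z))).
- by rewrite mul0mx T0; split => //; apply: H1.
- move=> z1 z2 [h1 H1'] [h2 H2']; rewrite mulmxDl h1 h2 addr0; split => //.
  by rewrite -TT //; apply: Hmul.
move=> q _; rewrite mxE -scalemxAl erow_ecol -transvT.
have [->|hqp] := eqVneq q p.
  rewrite hd scale0r; split => //.
  by rewrite /transv scale0r addr0; apply: H1.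
by split; [rewrite scaler0 | apply: ho; rewrite eq_sym].
Qed.

End Good.


Section Pair.
Variables (R : comPzRingType) (n : nat) (A I : R -> Prop).
Hypotheses (hA : is_ideal A) (hI : is_ideal I) (hn : (3 <= n)%N).
Local Notation M := 'M[R]_n.
Local Notation H := (@Hg R n A I).
Local Notation good := (@good R n A I).

Lemma erowP (k q : 'I_n) : ('e_k : 'rV[R]_n) 0 q = (q == k)%:R.
Proof. by rewrite mxE eqxx. Qed.

Lemma ecolP (k p : 'I_n) : (ecol k : 'cV[R]_n) p 0 = (p == k)%:R.
Proof. by rewrite mxE eqxx andbT. Qed.

Definition sk (u : 'cV[R]_n) (k l : 'I_n) : 'rV[R]_n := u l 0 *: 'e_k - u k 0 *: 'e_l.

Lemma skP u k l q : sk u k l 0 q = u l 0 * (q == k)%:R - u k 0 * (q == l)%:R.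
Proof. by rewrite /sk !mxE !eqxx. Qed.

Lemma rv_mulcv (s : 'rV[R]_n) (x : 'cV[R]_n) : s *m x = (\sum_p s 0 p * x p 0)%:M.
Proof. by apply/matrixP => a b; rewrite !ord1 !mxE eqxx mulr1n. Qed.

Lemma sk_u u k l : sk u k l *m u = 0.
Proof.
rewrite /sk mulmxBl -!scalemxAl !ecolE !scale_scalar_mx.
by rewrite (mulrC (u k 0)) subrr.
Qed.

Definition w2 (u : 'cV[R]_n) (k l : 'I_n) : 'cV[R]_n := u k 0 *: ecol k + u l 0 *: ecol l.

Lemma w2P u k l p : w2 u k l p 0 = u k 0 * (p == k)%:R + u l 0 * (p == l)%:R.
Proof. by rewrite /w2 !mxE !eqxx !andbT. Qed.

Lemma w2_elem (u : 'cV[R]_n) k l m : m != k -> m != l ->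
  T (w2 u k l) 'e_m = transv k m (u k 0) *m transv l m (u l 0).
Proof.
move=> hmk hml; rewrite !transvT' TT' // -scalemxAr erow_ecol (negbTE hml).
by rewrite scaler0.
Qed.

Lemma split_u (u : 'cV[R]_n) (S : 'rV[R]_n) k l : S *m u = 0 -> S *m w2 u k l = 0 ->
  T u S = T (w2 u k l) S *m T (u - w2 u k l) S.
Proof.
move=> h1 h2; rewrite TT'; first by rewrite addrC subrK.
by rewrite mulmxBr h1 h2 subrr.
Qed.

Lemma upP (u : 'cV[R]_n) k l p : (u - w2 u k l) p 0 = u p 0 - w2 u k l p 0.
Proof. by rewrite !mxE. Qed.

Lemma good_pair (u : 'cV[R]_n) (k l : 'I_n) (c : R) :
  k != l -> (forall r, good (c * r)) -> H (T u (c *: sk u k l)).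
Proof.
move=> hkl gm.
have [m [hmk hml]] := third hn k l.
set S := c *: sk u k l.
have SP q : S 0 q = c * (u l 0 * (q == k)%:R - u k 0 * (q == l)%:R).
  by rewrite mxE skP.
have hSu : S *m u = 0 by rewrite -scalemxAl sk_u scaler0.
have hSw : S *m w2 u k l = 0.
  rewrite rv_mulcv (bigD1 k) //= (bigD1 l) 1?eq_sym //= big1 ?addr0.
    rewrite !SP !w2P !eqxx (negbTE hkl) eq_sym (negbTE hkl) /=.
    rewrite (_ : _ + _ = 0) ?sc0 //; ring.
  move=> p /andP [hpk hpl]; rewrite w2P (negbTE hpk) (negbTE hpl).
  by rewrite !mulr0 !addr0 ?mulr0.
rewrite (split_u hSu hSw); apply: Hmul.
- have hSm : S *m ecol m = 0.
    by rewrite erowE SP (negbTE hmk) (negbTE hml) !mulr0 subrr mulr0 sc0.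
  have hmw : ('e_m : 'rV_n) *m w2 u k l = 0.
    by rewrite ecolE w2P (negbTE hmk) (negbTE hml) !mulr0 addr0 sc0.
  rewrite (Tkey hSw hSm hmw); apply: Hmul; last first.
    apply: (Hinv (x := T (ecol m) S)); last exact: Tinv.
    apply: Tgood => [p|p q hpq].
      by rewrite ecolP SP; case: eqP => [->|]; rewrite ?(negbTE hmk) ?(negbTE hml) ?mulr0 ?subrr ?mulr0 ?mul0r.
    by rewrite SP mulrCA; apply: gm.
  apply: Hconj.
  - rewrite w2_elem //; apply: gen_mul; apply: transv_elem; rewrite eq_sym //.
  - exact: Tinv.
  apply: Tgood => [p|p q hpq].
    by rewrite ecolP SP; case: eqP => [->|]; rewrite ?(negbTE hmk) ?(negbTE hml) ?mulr0 ?subrr ?mulr0 ?mul0r.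
  by rewrite SP mulrCA; apply: gm.
apply: Tgood => [p|p q hpq].
  rewrite upP w2P SP.
  have [epk|hpk] := eqVneq p k.
    by rewrite epk (negbTE hkl) /=; ring.
  have [epl|hpl] := eqVneq p l.
    by rewrite epl /=; ring.
  by rewrite ?(negbTE hpk) ?(negbTE hpl) /=; ring.
by rewrite SP mulrCA; apply: gm.
Qed.

Lemma grp_id (t t' h1 h1' h2 h2' P1 P1' P2 P2' : M) :
  t' * t = 1 -> h1' * h1 = 1 -> P2' * P2 = 1 -> h2' * h2 = 1 ->
  t * (h1 * h2 * (P2 * P1) * (h2' * h1') * (P1' * P2')) =
  (t * (h1 * (h2 * P2 * h2' * P2') * h1') * t') * (t * (h1 * P2 * h1' * P2'))
   * (P2 * (h1 * h2 * P1 * (h2' * h1') * P1') * P2').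
Proof.
move=> ht hh1 hP2 hh2; rewrite !mulrA.
rewrite -(mulrA _ t' t) ht mulr1.
rewrite -(mulrA _ h1' h1) hh1 mulr1.
rewrite -(mulrA _ P2' P2) hP2 mulr1.
rewrite -(mulrA _ P2' P2) hP2 mulr1.
rewrite -(mulrA _ h1' h1) hh1 mulr1.
by rewrite -(mulrA _ h2' h2) hh2 mulr1.
Qed.

Lemma cskP (u : 'cV[R]_n) k l c q : (c *: sk u k l) 0 q = c * (u l 0 * (q == k)%:R - u k 0 * (q == l)%:R).
Proof. by rewrite mxE skP. Qed.

Lemma sk_w2 (u : 'cV[R]_n) k l c : k != l -> (c *: sk u k l) *m w2 u k l = 0.
Proof.
move=> hkl; rewrite rv_mulcv (bigD1 k) //= (bigD1 l) 1?eq_sym //= big1 ?addr0.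
  rewrite !cskP !w2P !eqxx (negbTE hkl) eq_sym (negbTE hkl) /=.
  rewrite (_ : _ + _ = 0) ?sc0 //; ring.
move=> p /andP [hpk hpl]; rewrite w2P (negbTE hpk) (negbTE hpl).
by rewrite !mulr0 !addr0 ?mulr0.
Qed.

Lemma main_term (u : 'cV[R]_n) (i j : 'I_n) (a d : R) : i != j -> A a ->
  (forall p, p != i -> I (u p 0)) -> I (1 - d * u i 0 ^+ 2) ->
  H (transv i j a *m T u ((- a * d) *: sk u j i)).
Proof.
move=> hij ha hu hd.
have hji : j != i by rewrite eq_sym.
have [m [hmi hmj]] := third hn i j.
have him : i != m by rewrite eq_sym.
have hjm : j != m by rewrite eq_sym.
set S := (- a * d) *: sk u j i.
set x := u i 0; set z := u j 0.
have hz : I z by apply: hu.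
have SP q : S 0 q = (- a * d) * (x * (q == j)%:R - z * (q == i)%:R).
  by rewrite mxE skP.
have hSu : S *m u = 0 by rewrite -scalemxAl sk_u scaler0.
have hSw : S *m w2 u j i = 0 by apply: sk_w2.
rewrite (split_u hSu hSw) mulmxA; apply: Hmul; last first.
  have hu2 p : I ((u - w2 u j i) p 0).
    rewrite upP w2P.
    have [epj|hpj] := eqVneq p j; first by rewrite epj /= (negbTE hji) mulr1 mulr0 addr0 subrr; apply: (ideal0 hI).
    have [epi|hpi] := eqVneq p i; first by rewrite epi /= ?(negbTE hij) mulr0 mulr1 add0r subrr; apply: (ideal0 hI).
    by rewrite ?(negbTE hpj) ?(negbTE hpi) /= !mulr0 addr0 subr0; apply: hu.
  apply: Tgood => [p|p q hpq].
    rewrite upP w2P SP.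
    have [epj|hpj] := eqVneq p j; first by rewrite epj /= ?(negbTE hji) /=; ring.
    have [epi|hpi] := eqVneq p i; first by rewrite epi /= ?(negbTE hij) /=; ring.
    by rewrite ?(negbTE hpj) ?(negbTE hpi) /=; ring.
  rewrite SP (_ : _ * _ = a * ((u - w2 u j i) p 0 * (- d * (x * (q == j)%:R - z * (q == i)%:R)))); last by ring.
  apply: good_AI => //; case: hI => _ [_ hm]; rewrite mulrC; apply: hm; apply: hu2.
have hSm : S *m ecol m = 0.
  by rewrite erowE SP (negbTE hmi) (negbTE hmj) !mulr0 subrr mulr0 sc0.
have hmw : ('e_m : 'rV_n) *m w2 u j i = 0.
  by rewrite ecolE w2P (negbTE hmi) (negbTE hmj) !mulr0 addr0 sc0.
rewrite (Tkey hSw hSm hmw).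
have wE : w2 u j i = w2 u i j by rewrite /w2 addrC.
set c2 := a * (- d * x); set c1 := a * (d * z).
have eh : T (w2 u j i) 'e_m = transv i m x *m transv j m z by rewrite wE w2_elem.
have eP : T (ecol m) S = transv m j c2 *m transv m i c1.
  rewrite !transvT TT; last by rewrite -scalemxAl erow_ecol (negbTE hjm) scaler0.
  congr T; apply/rowP => q; rewrite SP !mxE !eqxx /= /c1 /c2; ring.
have eh' : T (w2 u j i) (- 'e_m) = transv j m (- z) *m transv i m (- x).
  apply: (inv_uniq (Tinv hmw)); rewrite eh; apply: inv_mul; exact: transv_inv.
have eP' : T (ecol m) (- S) = transv m i (- c1) *m transv m j (- c2).
  apply: (inv_uniq (Tinv hSm)); rewrite eP; apply: inv_mul; exact: transv_inv.
rewrite eh eP eh' eP' !mulmxE.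
rewrite (@grp_id _ (transv i j (- a)) _ (transv i m (- x)) _ (transv j m (- z))
   _ _ _ (transv m j (- c2))); last first.
- by rewrite -mulmxE; case: (transv_inv z hjm).
- by rewrite -mulmxE; case: (transv_inv c2 (j := j) hmj).
- by rewrite -mulmxE; case: (transv_inv x him).
- by rewrite -mulmxE; case: (transv_inv a hij).
rewrite -!mulmxE; apply: Hmul; first apply: Hmul.
- apply: Hconj; [exact: transv_elem | exact: transv_inv |].
  apply: Hconj; [exact: transv_elem | exact: transv_inv |].
  apply: Hcomm; try exact: transv_inv.
    by apply: elem_rel; apply: transv_egens.
  by apply: elem_rel; apply: transv_egens => //; case: hA => _ [_ hm]; rewrite /c2 mulrC; apply: hm.
- rewrite transv_comm // transv_add //.
  rewrite (_ : a + _ = a * (1 - d * x ^+ 2)); last by rewrite /c2; ring.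
  exact: good_AI.
apply: Hconj; [exact: transv_elem | exact: transv_inv |].
apply: Hmul.
  apply: Hconj.
  - by apply: gen_mul; apply: transv_elem.
  - by apply: inv_mul; apply: transv_inv.
  by apply: good_AI => //; case: hI => _ [_ hm]; apply: hm.
apply: (Hinv (x := transv m i c1)); last exact: transv_inv.
by apply: good_AI => //; case: hI => _ [_ hm]; apply: hm.
Qed.

End Pair.


Section Core.
Variables (R : comPzRingType) (n : nat) (A I : R -> Prop).
Hypotheses (hA : is_ideal A) (hI : is_ideal I) (hn : (3 <= n)%N).
Local Notation M := 'M[R]_n.
Local Notation H := (@Hg R n A I).
Local Notation good := (@good R n A I).

Lemma IMr (x y : R) : I x -> I (x * y).
Proof. by case: hI => _ [_ hm] hx; rewrite mulrC; apply: hm. Qed.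
Lemma IMl (x y : R) : I y -> I (x * y).
Proof. by case: hI => _ [_ hm] hx; apply: hm. Qed.

Lemma sum_but (P : R -> Prop) (hP : is_ideal P) (f : 'I_n -> R) p :
  (forall k, k != p -> P (f k)) -> P (\sum_k f k - f p).
Proof.
move=> hf; rewrite (bigD1 p) //= addrC addrK.
apply: big_ind => //; first exact: ideal0.
by move=> x y; apply: idealD.
Qed.

Definition offI (g : M) := forall p q : 'I_n, p != q -> I (g p q).
Definition diagI (g : M) := forall p q : 'I_n, I (g p p - g q q).

Lemma inv_diag (g g' : M) p : offI g -> g' *m g = 1%:M -> I (1 - g' p p * g p p).
Proof.
move=> ho e.
have := congr1 (fun m : M => m p p) e; rewrite /= !mxE eqxx mulr1n => <-.
apply: sum_but => // k hk; apply: idealM => //; apply: ho; exact: hk.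
Qed.

Lemma inv_off (g g' : M) : offI g -> g' *m g = 1%:M -> offI g'.
Proof.
move=> ho e p q hpq.
have h1 : I (g' p q * g q q).
  have h0 : \sum_k g' p k * g k q = 0.
    by have := congr1 (fun m : M => m p q) e; rewrite /= !mxE (negbTE hpq) mulr0n.
  rewrite (_ : g' p q * g q q = \sum_k g' p k * g k q - (\sum_k g' p k * g k q - g' p q * g q q)); last first.
    by rewrite opprB addrC subrK.
  rewrite {1}h0 sub0r; apply: idealN => //.
  have hs := @sum_but I hI (fun k => g' p k * g k q) q; apply: hs => k hk.
  by apply: idealM => //; apply: ho; exact: hk.
have h2 := inv_diag q ho e.
rewrite (_ : g' p q = g' p q * (1 - g' q q * g q q) + g' q q * (g' p q * g q q)); last by ring.
by apply: idealD => //; apply: idealM.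
Qed.

Lemma inv_diagI (g g' : M) : offI g -> diagI g -> g' *m g = 1%:M -> diagI g'.
Proof.
move=> ho hd e p q.
have hp := inv_diag p ho e; have hq := inv_diag q ho e.
rewrite (_ : g' p p - g' q q = g' p p * (1 - g' q q * g q q) - g' q q * (1 - g' p p * g p p)
   + g' p p * g' q q * (g q q - g p p)); last by ring.
apply: idealD => //; last by apply: idealM.
by apply: idealB => //; apply: idealM.
Qed.

Lemma koszul (u : 'cV[R]_n) (v w : 'rV[R]_n) :
  \sum_l w 0 l * u l 0 = 1 -> \sum_k v 0 k * u k 0 = 0 ->
  v = \sum_(pr : 'I_n * 'I_n) (v 0 pr.1 * w 0 pr.2) *: sk u pr.1 pr.2.
Proof.
move=> wu vu; apply/rowP => q; rewrite summxE.
rewrite -(pair_bigA _ (fun k l => ((v 0 k * w 0 l) *: sk u k l) 0 q)) /=.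
symmetry; transitivity (\sum_k \sum_l ((v 0 k * (q == k)%:R) * (w 0 l * u l 0)
     - (w 0 l * (q == l)%:R) * (v 0 k * u k 0))).
  by apply: eq_bigr => k _; apply: eq_bigr => l _; rewrite cskP; ring.
under eq_bigr => k _ do rewrite sumrB -mulr_sumr wu mulr1 -mulr_suml.
rewrite sumrB -mulr_sumr vu mulr0 subr0.
rewrite (bigD1 q) //= eqxx mulr1 big1 ?addr0 // => k hk.
by rewrite eq_sym (negbTE hk) mulr0.
Qed.

Lemma core (g g' : M) (i j : 'I_n) (a : R) : inv_of g g' -> offI g -> diagI g ->
  i != j -> A a -> H (transv i j a *m g *m transv i j (- a) *m g').
Proof.
move=> hg ho hd hij ha.
have [e1 e2] := hg.
have ho' := inv_off ho e2; have hd' := inv_diagI ho hd e2.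
set u := col i g; set v := row j g'; set w := row i g'.
have E : g *m transv i j (- a) *m g' = T u ((- a) *: v).
  by rewrite transvT (Tconj _ _ hg) -colE -scalemxAl -rowE.
have -> : transv i j a *m g *m transv i j (- a) *m g' = transv i j a *m T u ((- a) *: v).
  by rewrite -E !mulmxA.
have wu : \sum_l w 0 l * u l 0 = 1.
  have := congr1 (fun m : M => m i i) e2; rewrite /= !mxE eqxx mulr1n => <-.
  by apply: eq_bigr => l _; rewrite !mxE.
have vu : \sum_k v 0 k * u k 0 = 0.
  transitivity ((g' *m g) j i); last by rewrite e2 mxE eq_sym (negbTE hij).
  by rewrite mxE; apply: eq_bigr => l _; rewrite !mxE.
rewrite (koszul wu vu) scaler_sumr (bigD1 (j, i)) //=.
rewrite -TT; last by rewrite -!scalemxAl sk_u !scaler0.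
rewrite mulmxA; apply: Hmul.
  rewrite scalerA.
  apply: (main_term hA hI hn) => //.
    by move=> p hpi; rewrite mxE; apply: ho.
  rewrite !mxE.
  have h1 := inv_diag i ho e2; have h2 := hd' j i.
  rewrite (_ : 1 - _ = (1 - g' i i * g i i) + g' i i * g i i * (1 - g' i i * g i i)
     - g' i i * g i i ^+ 2 * (g' j j - g' i i)); last by ring.
  apply: idealB => //; last by apply: idealM.
  by apply: idealD => //; apply: idealM.
suff : (\sum_(pr | pr != (j, i)) - a *: ((v 0 pr.1 * w 0 pr.2) *: sk u pr.1 pr.2)) *m u = 0 /\
  H (T u (\sum_(pr | pr != (j, i)) - a *: ((v 0 pr.1 * w 0 pr.2) *: sk u pr.1 pr.2))) by case.
apply: (big_ind (fun s => s *m u = 0 /\ H (T u s))).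
- by rewrite mul0mx T0; split => //; apply: H1.
- move=> s1 s2 [h1 H1'] [h2 H2']; rewrite mulmxDl h1 h2 addr0; split => //.
  by rewrite -TT //; apply: Hmul.
move=> [k l] /= hkl; split; first by rewrite -!scalemxAl sk_u !scaler0.
rewrite scalerA.
have [ekl|nkl] := eqVneq k l.
  by rewrite ekl /sk subrr scaler0 T0; apply: H1.
apply: (good_pair hn) => // r.
rewrite (_ : - a * _ * r = - a * (v 0 k * w 0 l * r)); last by ring.
apply: (good_AI hn); first exact: idealN.
rewrite !mxE.
move: hkl; rewrite xpair_eqE negb_and => /orP [hk|hl].
  by apply: IMr; apply: IMr; apply: ho'; rewrite eq_sym.
by apply: IMr; apply: IMl; apply: ho'; rewrite eq_sym.
Qed.

End Core.


Section Red.
Variables (R : comPzRingType) (n : nat) (A I : R -> Prop).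
Hypotheses (hA : is_ideal A) (hI : is_ideal I) (hn : (3 <= n)%N).
Local Notation M := 'M[R]_n.
Local Notation H := (@Hg R n A I).

Definition Cg (g : M) := GLn g /\ offI I g /\ diagI I g.

Definition mxI (P : R -> Prop) (N : M) := forall p q, P (N p q).

Lemma PMr (P : R -> Prop) (hP : is_ideal P) (x y : R) : P x -> P (x * y).
Proof. by case: hP => _ [_ hm] hx; rewrite mulrC; apply: hm. Qed.
Lemma PMl (P : R -> Prop) (hP : is_ideal P) (x y : R) : P y -> P (x * y).
Proof. by case: hP => _ [_ hm] hx; apply: hm. Qed.

Lemma mxI_mull (P : R -> Prop) (hP : is_ideal P) (X N : M) : mxI P N -> mxI P (X *m N).
Proof.
move=> hN p q; rewrite mxE; apply: big_ind => //; first exact: ideal0.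
  by move=> x y; apply: idealD.
by move=> k _; apply: PMl.
Qed.

Lemma mxI_mulr (P : R -> Prop) (hP : is_ideal P) (X N : M) : mxI P N -> mxI P (N *m X).
Proof.
move=> hN p q; rewrite mxE; apply: big_ind => //; first exact: ideal0.
  by move=> x y; apply: idealD.
by move=> k _; apply: PMr.
Qed.

Lemma Cg_conj (g h h' : M) : Cg g -> inv_of h h' -> Cg (h *m g *m h').
Proof.
move=> [gg [ho hd]] hh; split.
  apply: GL_mul; first apply: GL_mul => //; by [exists h'| exists h; apply: inv_sym].
have h0 : (0 < n)%N by lia.
pose o := Ordinal h0; pose lam := g o o.
pose N := g - lam%:M.
have hN : mxI I N.
  move=> p q; rewrite /N !mxE.
  have [epq|npq] := eqVneq p q.
    by rewrite epq mulr1n; apply: hd.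
  by rewrite mulr0n subr0; apply: ho.
have E : h *m g *m h' = lam%:M + h *m N *m h'.
  rewrite /N mulmxBr mulmxBl mul_mx_scalar -scalemxAl hh.1 scalemx1.
  by rewrite addrC subrK.
have hN' : mxI I (h *m N *m h') by apply: mxI_mulr => //; apply: mxI_mull.
have addsc (X : M) p q : (lam%:M + X) p q = lam *+ (p == q) + X p q.
  by rewrite mxE [lam%:M p q]mxE.
rewrite E; split => [p q hpq|p q]; rewrite ?addsc.
  by rewrite (negbTE hpq) mulr0n add0r; apply: hN'.
rewrite !eqxx mulr1n (_ : _ - _ = (h *m N *m h') p p - (h *m N *m h') q q); last first.
  by rewrite opprD addrACA subrr add0r.
by apply: idealB => //; apply: hN'.
Qed.

Lemma red_ind (S : M -> Prop) : (forall s, S s -> GLn s) ->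
  (forall x, gen S x -> elem x) ->
  (forall s, S s -> forall g g' s', Cg g -> inv_of g g' -> inv_of s s' -> H (s *m g *m s' *m g')) ->
  (forall s s', S s -> inv_of s s' -> forall g g', Cg g -> inv_of g g' -> H (s' *m g *m s *m g')) ->
  forall x, gen S x -> forall g g' x', Cg g -> inv_of g g' -> inv_of x x' -> H (x *m g *m x' *m g').
Proof.
move=> hGL hel hS hSi x; elim => [|s Ss|s y Ss hsy|x1 x2 g1 IH1 g2 IH2] g g' x' Cgg hg hx.
- rewrite -(inv_uniq (@inv1 R n) hx) mul1mx mulmx1 hg.1; exact: H1.
- exact: hS.
- rewrite -(inv_uniq (inv_sym hsy) hx); exact: hSi.
- have [x1' h1] := gen_GL hGL g1; have [x2' h2] := gen_GL hGL g2.
  rewrite -(inv_uniq (inv_mul h1 h2) hx).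
  have -> : x1 *m x2 *m g *m (x2' *m x1') *m g' =
     (x1 *m (x2 *m g *m x2' *m g') *m x1') *m (x1 *m g *m x1' *m g').
    rewrite !mulmxA -(mulmxA _ x1' x1) h1.2 mulmx1.
    by rewrite -(mulmxA _ g' g) hg.2 mulmx1.
  apply: Hmul; last exact: IH1.
  apply: Hconj => //; first exact: hel.
  exact: IH2.
Qed.

Lemma red_elem x : elem_ideal A x -> forall g g' x', Cg g -> inv_of g g' -> inv_of x x' ->
  H (x *m g *m x' *m g').
Proof.
apply: red_ind.
- exact: egens_GL.
- exact: elem_ideal_elem.
- move=> s [i [j [a [hij ha ->]]]] g g' s' [_ [ho hd]] hg hs.
  rewrite -(inv_uniq (transv_inv a hij) hs); exact: core.
- move=> s s' [i [j [a [hij ha ->]]]] hs g g' [_ [ho hd]] hg.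
  rewrite -(inv_uniq (transv_inv a hij) hs) -{2}(opprK a).
  by apply: core => //; apply: idealN.
Qed.

Lemma red_gen s : rgens A s -> forall g g' s', Cg g -> inv_of g g' -> inv_of s s' ->
  H (s *m g *m s' *m g').
Proof.
move=> [g0 [g0' [y [eg hg0 ey ->]]]] g g' s' Cgg hg hs.
have [y' hy] := elem_GL ey.
have hs2 : inv_of (g0 *m y *m g0') (g0 *m y' *m g0').
  by have := inv_mul (inv_mul hg0 hy) (inv_sym hg0); rewrite mulmxA.
rewrite -(inv_uniq hs2 hs).
have -> : g0 *m y *m g0' *m g *m (g0 *m y' *m g0') *m g' =
  g0 *m (y *m (g0' *m g *m g0) *m y' *m (g0' *m g' *m g0)) *m g0'.
  by rewrite !mulmxA -(mulmxA _ g0 g0') hg0.1 mulmx1.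
apply: Hconj => //.
apply: red_elem => //.
- by apply: Cg_conj => //; apply: inv_sym.
- by have := inv_mul (inv_mul (inv_sym hg0) hg) hg0; rewrite !mulmxA.
Qed.

Lemma red_rel x : rel_elem A x -> forall g g' x', Cg g -> inv_of g g' -> inv_of x x' ->
  H (x *m g *m x' *m g').
Proof.
apply: red_ind.
- exact: rgens_GL.
- exact: rel_elem_elem.
- exact: red_gen.
- move=> s s' [g0 [g0' [y [eg hg0 ey ->]]]] hs g g' Cgg hg.
  have [y' hy] := elem_GL ey.
  have hs2 : inv_of (g0 *m y *m g0') (g0 *m y' *m g0').
    by have := inv_mul (inv_mul hg0 hy) (inv_sym hg0); rewrite mulmxA.
  rewrite -(inv_uniq hs2 hs).
  apply: red_gen => //; last exact: inv_sym hs2.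
  by exists g0, g0', y'; split => //; exact: elem_inv ey hy.
Qed.

End Red.


Section Lev.
Variables (R : comPzRingType) (n : nat) (A B : R -> Prop).
Hypotheses (hA : is_ideal A) (hB : is_ideal B) (hn : (3 <= n)%N).
Local Notation M := 'M[R]_n.
Local Notation I := (ideal_quot B A).
Local Notation H := (@Hg R n A I).

Lemma quot_ideal : is_ideal I.
Proof.
split; first by move=> a _; rewrite mul0r; apply: ideal0.
split.
  by move=> x y hx hy a ha; rewrite mulrDl; apply: idealD => //; [apply: hx | apply: hy].
by move=> r x hx a ha; rewrite -mulrA; apply: PMl => //; apply: hx.
Qed.

Lemma mxI_add (P : R -> Prop) (hP : is_ideal P) (X Y : M) : mxI P X -> mxI P Y -> mxI P (X + Y).
Proof. by move=> hX hY p q; rewrite mxE; apply: idealD. Qed.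

Lemma mxI_opp (P : R -> Prop) (hP : is_ideal P) (X : M) : mxI P X -> mxI P (- X).
Proof. by move=> hX p q; rewrite mxE; apply: idealN => //; apply: hX. Qed.

Lemma gen_level (P : R -> Prop) (hP : is_ideal P) (S : M -> Prop) :
  (forall s, S s -> mxI P (s - 1%:M)) -> forall x, gen S x -> mxI P (x - 1%:M).
Proof.
move=> hS x; elim => [|s Ss|s y Ss hsy|x1 x2 _ IH1 _ IH2].
- by rewrite subrr => p q; rewrite mxE; apply: ideal0.
- exact: hS.
- have -> : y - 1%:M = - ((s - 1%:M) *m y).
    by rewrite mulmxBl hsy.1 mul1mx opprB.
  by apply: mxI_opp => //; apply: mxI_mulr => //; apply: hS.
- have -> : x1 *m x2 - 1%:M = (x1 - 1%:M) *m x2 + (x2 - 1%:M).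
    by rewrite mulmxBl mul1mx addrA subrK.
  by apply: mxI_add => //; apply: mxI_mulr.
Qed.

Lemma elem_level (P : R -> Prop) (hP : is_ideal P) (x : M) : elem_ideal P x -> mxI P (x - 1%:M).
Proof.
apply: gen_level => // s [i [j [c [hij hc ->]]]] p q.
by rewrite /transv addrC addKr mxE; apply: PMr.
Qed.

Lemma rel_level (P : R -> Prop) (hP : is_ideal P) (x : M) : rel_elem P x -> mxI P (x - 1%:M).
Proof.
apply: gen_level => // s [g [g' [y [eg hg ey ->]]]].
have -> : g *m y *m g' - 1%:M = g *m (y - 1%:M) *m g'.
  by rewrite mulmxBr mulmxBl mulmx1 hg.1.
by apply: mxI_mulr => //; apply: mxI_mull => //; apply: elem_level.
Qed.

Lemma H_level (x : M) : H x -> mxI B (x - 1%:M).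
Proof.
apply: gen_level => // s [f [h [f' [h' [Ff Gh hf hh ->]]]]].
have -> : f *m h *m f' *m h' - 1%:M =
   ((f - 1%:M) *m (h - 1%:M) - (h - 1%:M) *m (f - 1%:M)) *m (f' *m h').
  rewrite !(mulmxBl, mulmxBr) !(mul1mx, mulmx1) !mulmxA.
  rewrite -(mulmxA h f f') hf.1 mulmx1 hh.1 !mul1mx.
  move: (f *m h *m f' *m h') (h *m f' *m h') (f' *m h') => X b c.
  by apply/matrixP => p q; rewrite !mxE; ring.
have hF := rel_level quot_ideal Ff; have hG := rel_level hA Gh.
apply: mxI_mulr => //; apply: mxI_add => //; last apply: mxI_opp => //.
  move=> p q; rewrite mxE; apply: big_ind => //; first exact: ideal0.
    by move=> ? ?; apply: idealD.
  by move=> k _; apply: hF.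
move=> p q; rewrite mxE; apply: big_ind => //; first exact: ideal0.
  by move=> ? ?; apply: idealD.
by move=> k _; rewrite mulrC; apply: hF.
Qed.

End Lev.


Section Fin.
Variables (R : comPzRingType) (n : nat) (A B : R -> Prop).
Hypotheses (hA : is_ideal A) (hB : is_ideal B) (hn : (3 <= n)%N).
Local Notation M := 'M[R]_n.
Local Notation I := (ideal_quot B A).

Lemma subE (X Y : M) p q : (X - Y) p q = X p q - Y p q.
Proof. by rewrite !mxE. Qed.
Lemma scaleE (c : R) (X : M) p q : (c *: X) p q = c * X p q.
Proof. by rewrite !mxE. Qed.
Lemma dg (g : M) (i j p q : 'I_n) : (delta_mx i j *m g) p q = (p == i)%:R * g j q.
Proof.
rewrite mxE (bigD1 j) //= mxE eqxx andbT big1 ?addr0 // => k hk.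
by rewrite mxE (negbTE hk) andbF mul0r.
Qed.
Lemma gd (g : M) (i j p q : 'I_n) : (g *m delta_mx i j) p q = g p i * (q == j)%:R.
Proof.
rewrite mxE (bigD1 i) //= mxE eqxx big1 ?addr0 // => k hk.
by rewrite mxE (negbTE hk) mulr0.
Qed.

Lemma tg_entry (g : M) (i j : 'I_n) (a : R) p q :
  (transv i j a *m g - g *m transv i j a) p q = a * ((p == i)%:R * g j q - g p i * (q == j)%:R).
Proof.
rewrite /transv mulmxDl mulmxDr mul1mx mulmx1 -scalemxAl -scalemxAr.
rewrite opprD addrACA subrr add0r subE !scaleE dg gd mulrBr.
by [].
Qed.

Lemma cm_entry (g : M) :
  centr_mod (rel_elem A) (comm_subgroup (rel_elem I) (rel_elem A)) g ->
  forall (i j : 'I_n) a p q, i != j -> A a ->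
  B (a * ((p == i)%:R * g j q - g p i * (q == j)%:R)).
Proof.
case=> [[g' hg] hc] i j a p q hij ha.
have hX := hc (transv i j a) (transv i j (- a)) g'
   (elem_rel (transv_egens hij ha)) (transv_inv a hij) hg.
have hL := H_level hA hB hX.
have := mxI_mulr hB (g *m transv i j a) hL p q.
rewrite -tg_entry.
suff -> : (transv i j a *m g *m transv i j (- a) *m g' - 1%:M) *m (g *m transv i j a)
   = transv i j a *m g - g *m transv i j a by [].
rewrite mulmxBl mul1mx !mulmxA -(mulmxA _ g' g) hg.2 mulmx1.
by rewrite -(mulmxA _ (transv i j (- a))) (transv_inv a hij).2 mulmx1.
Qed.

End Fin.

Unset Implicit Arguments.

Theorem theorem2 (R : comPzRingType) (n : nat) (A B : R -> Prop)
  (hA : is_ideal A) (hB : is_ideal B) (hn : (3 <= n)%N) :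
  forall g : 'M[R]_n,
    centr_mod (rel_elem A)
      (comm_subgroup (rel_elem (ideal_quot B A)) (rel_elem A)) g
    <-> full_cong (ideal_quot B A) g.
Proof.
move=> g; split.
  move=> hc; split; first by case: hc.
  move=> i j hij; split => b hb.
    have [r [hri hrj]] := third hn j i.
    have hrj' : j != r by rewrite eq_sym.
    have := @cm_entry R n A B hA hB g hc j r b i r hrj' hb.
    rewrite eqxx (negbTE hij) mul0r sub0r mulr1 => h.
    by rewrite (_ : _ * _ = - (b * - g i j)); [apply: idealN | ring].
  have := @cm_entry R n A B hA hB g hc i j b i j hij hb.
  rewrite !eqxx !mul1r mulr1 => h.
  rewrite (_ : _ * _ = - (b * (g j j - g i i))); last by ring.
  by apply: idealN.
case=> gGL hf; split => // f f' g' hrel hf' hg'.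
apply: (red_rel hA (quot_ideal A hB) hn hrel) => //.
split => //; split => [p q hpq|p q]; first by case: (hf p q hpq).
have [->|hpq] := eqVneq p q.
  by rewrite subrr; apply: ideal0; apply: quot_ideal.
by case: (hf p q hpq).
Qed.
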